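(* Let $\mathcal{D}$ be any distribution over probability distributions on $[s]$, $\epsilon,\delta>0$, and let $X_1,\dots,X_{T_0}$ be i.i.d. samples from $\mathcal{D}$ with $T_0=c_0\frac1\epsilon\log\frac1{\epsilon\delta}$ for a sufficiently large absolute constant $c_0$. Let $J_{\mathrm{large}}$ be the set of $j\in[s]$ such that $p_{X_i}(j)\ge\epsilon/2$ for some $i\le T_0$. Then $|J_{\mathrm{large}}|\le O\left(\frac{1}{\epsilon^2}\log\frac{1}{\epsilon\delta}\right)$, and with failure probability at most $\delta/100$, every $j$ with $p_{M(\mathcal{D})}(j)\ge\epsilon$ belongs to $J_{\mathrm{large}}$.
   Context: Each sample $X\sim\mathcal{D}$ is a distribution on $[s]=\{1,\dots,s\}$ with probabilities $p_X(1),\dots,p_X(s)$, and $p_{M(\mathcal{D})}(j)=\mathbb{E}_{X\sim\mathcal{D}}[p_X(j)]$. *)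

(* Defs.v *)
From HB Require Import structures.
From mathcomp Require Import all_boot all_order all_algebra.
From mathcomp Require Import all_classical all_reals all_analysis.
Set Implicit Arguments. Unset Strict Implicit. Unset Printing Implicit Defensive.
Import Order.TTheory GRing.Theory Num.Theory.
Local Open Scope classical_set_scope.
Local Open Scope ring_scope.

(* Mutual independence of a finite family of random elements
   X i : Omega -> S (i : 'I_n), each measurable for the sigma-algebra of S:
   for every choice of measurable sets A i, the events {X i \in A i}
   satisfy the product rule. (Taking A i = setT for some i gives the
   product rule for every subfamily, so this is the usual mutual
   independence of the sigma-algebras sigma(X i) = X i^-1(measurable).) *)
Definition mutually_independent {R : realType} {d d' : measure_display}
  {Omega : measurableType d} {S : measurableType d'}
  (P : probability Omega R) (n : nat) (X : 'I_n -> Omega -> S) : Prop :=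
  forall A : 'I_n -> set S, (forall i, measurable (A i)) ->
    P (\bigcap_i (X i @^-1` A i)) = \big[*%E/1%E]_(i < n) P (X i @^-1` A i).

Definition has_law {R : realType} {d d' : measure_display}
  {Omega : measurableType d} {S : measurableType d'}
  (P : probability Omega R) (D : probability S R) (Y : Omega -> S) : Prop :=
  forall A : set S, measurable A -> P (Y @^-1` A) = D A.

Definition is_distr {R : realType} (s : nat) (q : 'I_s -> R) : Prop :=
  (forall j, 0 <= q j) /\ \sum_(j < s) q j = 1.

Definition mixture {R : realType} {d' : measure_display} {S : measurableType d'}
  (D : probability S R) (s : nat) (p : S -> 'I_s -> R) (j : 'I_s) : \bar R :=
  (\int[D]_x (p x j)%:E)%E.

Definition J_large {R : realType} {S : Type} (s T0 : nat)
  (p : S -> 'I_s -> R) (Xs : 'I_T0 -> S) (eps : R) : {set 'I_s} :=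
  [set j | [exists i, eps / 2 <= p (Xs i) j]].

(* Main.v *)
Require Import Defs.
From HB Require Import structures.
From mathcomp Require Import all_boot all_order all_algebra.
From mathcomp Require Import all_classical all_reals all_analysis.
From mathcomp Require Import ring lra measurable_realfun.
Import Order.TTheory GRing.Theory Num.Theory.
Local Open Scope classical_set_scope.
Local Open Scope ring_scope.
Lemma prod_le (R : realType) n (f : 'I_n -> \bar R) (c : R) : 0 <= c ->
  (forall i, (0 <= f i)%E) -> (forall i, (f i <= c%:E)%E) ->
  (\prod_(i < n) f i <= (c ^+ n)%:E)%E.
Proof.
move=> c0; elim: n f => [|n IH] f f0 fc; first by rewrite big_ord0 expr0.
rewrite big_ord_recr /= exprSr EFinM; apply: lee_pmul => //.
  by apply: prode_ge0.
exact: IH.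
Qed.

Lemma union_bound d (T : measurableType d) (R : realType)
  (mu : {measure set T -> \bar R}) (I : Type) (r : seq I) (Pr : pred I)
  (F : I -> set T) : (forall i, measurable (F i)) ->
  (mu (\big[setU/set0]_(i <- r | Pr i) F i) <= \sum_(i <- r | Pr i) mu (F i))%E.
Proof.
move=> mF; elim: r => [|a r IH]; first by rewrite !big_nil measure0.
rewrite !big_cons; case: (Pr a) => //.
apply: le_trans (measureU2 _ _ _) _ => //; first exact: bigsetU_measurable.
by apply: leeD.
Qed.
Lemma mix_bound (R : realType) d' (S : measurableType d') (D : probability S R)
  (f : S -> R) (e : R) : measurable_fun setT f -> (forall x, 0 <= f x <= 1) -> 0 <= e ->
  (e%:E <= \int[D]_x (f x)%:E)%E ->
  (D (f @^-1` `]-oo, (e/2)%R[) <= (1 - e/2)%:E)%E.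
Proof.
move=> mf f01 e0 he.
set A := f @^-1` _.
have mA : measurable A.
  by have := mf measurableT _ (measurable_itv `]-oo, (e/2)%R[); rewrite setTI.
have le1 : (\int[D]_x (f x)%:E <= \int[D]_x ((e/2)%:E + (\1_(~` A) x)%:E))%E.
  apply: ge0_le_integral => //.
  - by move=> x _; rewrite lee_fin; case/andP: (f01 x).
  - by apply/measurable_EFinP.
  - apply: emeasurable_funD; first exact: measurable_cst.
    apply/measurable_EFinP; apply: measurable_indic; exact: measurableC.
  - move=> x _; rewrite -EFinD lee_fin /A /= indicE in_setC.
    case: (boolP (x \in _)) => h /=.
      move/set_mem: h => /=; rewrite in_itv /= => h.
      by rewrite addr0; apply/ltW.
    by case/andP: (f01 x) => _ h1; lra.
rewrite ge0_integralD // in le1; last 2 first.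
- by move=> x _; rewrite lee_fin; lra.
- apply/measurable_EFinP; apply: measurable_indic; exact: measurableC.
have hc : (\int[D]_x (e/2)%:E = (e/2)%:E)%E.
  rewrite (integral_cst D measurableT ((e/2)%:E)).
  by rewrite -[RHS]mule1; congr (_ * _)%E; exact: probability_setT.
have hi : (\int[D]_x (\1_(~` A) x)%:E = 1 - D A)%E.
  rewrite integral_indic //; last exact: measurableC.
  by rewrite setIT; exact: probability_setC.
move: le1; set I1 := (X in (_ <= X + _)%E); set I2 := (X in (_ <= _ + X)%E).
have -> : I1 = (e/2)%:E by exact: hc.
have -> : I2 = (1 - D A)%E by exact: hi.
move=> le1.
have := le_trans he le1.
have : (0 <= D A)%E by [].
have : (D A <= 1)%E by apply: probability_le1.
case: (D A) => [r| |] //=; rewrite !lee_fin => r1 r0.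
move=> h; lra.
Qed.
Lemma count_big (R : realType) d' (S : measurableType d') (D : probability S R)
  s (p : S -> 'I_s -> R) (eps : R) :
  (forall j, measurable_fun setT (fun x => p x j)) -> (forall x, is_distr (p x)) ->
  #|[set j | (eps%:E <= mixture D p j)%E]|%:R * eps <= 1.
Proof.
move=> mp pd.
have m0 j : (0 <= mixture D p j)%E.
  by apply: integral_ge0 => x _; rewrite lee_fin; case: (pd x) => h _; exact: h.
have hsum : (\sum_(j < s) mixture D p j = 1)%E.
  rewrite /mixture -ge0_integral_sum //; last first.
  - by move=> j x _; rewrite lee_fin; case: (pd x) => h _; exact: h.
  - by move=> j; apply/measurable_EFinP; exact: mp.
  have -> : (fun x => \sum_(j < s) (p x j)%:E) = (fun x => 1%:E)%E.
    apply/funext => x; rewrite sumEFin; case: (pd x) => _ ->; by [].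
  rewrite (integral_cst D measurableT 1%E) mul1e; exact: probability_setT.
rewrite -lee_fin -hsum.
apply: (@le_trans _ _ (\sum_(j in [set j | (eps%:E <= mixture D p j)%E]) mixture D p j)%E).
  rewrite mulr_natl -sumr_const -sumEFin.
  by apply: lee_sum => j; rewrite inE.
rewrite [X in (_ <= X)%E](bigID (fun j => j \in [set j | (eps%:E <= mixture D p j)%E])) /=.
rewrite leeDl //; by apply: sume_ge0.
Qed.

Theorem lemma3p8 (R : realType) :
  exists c1 : R, 0 < c1 /\
  forall c0 : R, c1 <= c0 ->
  exists C : R, 0 < C /\
  forall (s : nat) (d d' : measure_display)
    (Omega : measurableType d) (P : probability Omega R)
    (S : measurableType d') (D : probability S R) (p : S -> 'I_s -> R),
    (forall j, measurable_fun setT (fun x => p x j)) ->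
    (forall x, is_distr (p x)) ->
  forall (eps delta : R), 0 < eps -> eps <= 1 / 2 -> 0 < delta -> delta < 1 ->
  forall (T0 : nat),
    c0 / eps * ln (1 / (eps * delta)) <= T0%:R ->
    T0%:R < c0 / eps * ln (1 / (eps * delta)) + 1 ->
  forall X : 'I_T0 -> Omega -> S,
    (forall i, measurable_fun setT (X i)) ->
    (forall i, has_law P D (X i)) ->
    mutually_independent P X ->
    (forall w : Omega,
       (#|J_large p (fun i => X i w) eps|%:R <= C / eps ^+ 2 * ln (1 / (eps * delta))))
    /\
    (P [set w | exists j : 'I_s, (eps%:E <= mixture D p j)%E /\
                  j \notin J_large p (fun i => X i w) eps] <= (delta / 100)%:E)%E.
Proof.
exists 16; split; first lra.
move=> c0 hc0; exists (2 * c0 + 4); split; first lra.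
move=> s d d' Omega P S D p mp pd eps delta he0 he1 hd0 hd1 T0 hT1 hT2 X mX lawX indX.
set L := ln (1 / (eps * delta)) in hT1 hT2 *.
have ed0 : 0 < eps * delta by apply: mulr_gt0.
have ed1 : eps * delta <= 1/2 by nra.
have hexpL : expR (- L) = eps * delta.
  rewrite expRN /L lnK ?div1r ?invrK // posrE invr_gt0 //.
have hL : 1/2 <= L by have := expR_ge1Dx (- L); rewrite hexpL => h; lra.
have p01 x j : 0 <= p x j <= 1.
  case: (pd x) => h0 h1; rewrite h0 /= -h1 (bigD1 j) //= lerDl.
  by apply: sumr_ge0 => k _.
split.
- move=> w.
  set J := J_large _ _ _.
  have key : #|J|%:R * (eps / 2) <= T0%:R.
    have hJ j : j \in J -> eps / 2 <= \sum_(i < T0) p (X i w) j.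
      rewrite inE => /existsP [i hi]; rewrite (bigD1 i) //=.
      have : 0 <= \sum_(k < T0 | k != i) p (X k w) j by apply: sumr_ge0 => k _; case/andP: (p01 (X k w) j).
      lra.
    apply: (@le_trans _ _ (\sum_(j in J) \sum_(i < T0) p (X i w) j)).
      by rewrite mulr_natl -sumr_const; apply: ler_sum => j; apply: hJ.
    apply: (@le_trans _ _ (\sum_(j < s) \sum_(i < T0) p (X i w) j)).
      rewrite [X in _ <= X](bigID (fun j => j \in J)) /= lerDl.
      by apply: sumr_ge0 => j _; apply: sumr_ge0 => i _; case/andP: (p01 (X i w) j).
    rewrite exchange_big /=.
    have -> : \sum_(i < T0) \sum_(j < s) p (X i w) j = \sum_(i < T0) 1.
      by apply: eq_bigr => i _; case: (pd (X i w)).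
    by rewrite sumr_const card_ord.
  set K := #|J|%:R in key *.
  have K0 : 0 <= K by rewrite /K.
  have e1 : eps * (c0 / eps * L) = c0 * L by field; exact: lt0r_neq0.
  have s1 : K * eps ^+ 2 <= (2 * c0 + 4) * L.
    have t1 : eps * T0%:R <= c0 * L + eps by nra.
    rewrite expr2; nra.
  rewrite mulrAC ler_pdivlMr //; exact: exprn_gt0.
- set Jb := [set j | (eps%:E <= mixture D p j)%E].
  pose A j := (fun x => p x j) @^-1` `]-oo, (eps / 2)%R[.
  have mA j : measurable (A j).
    by have := mp j measurableT _ (measurable_itv `]-oo, (eps / 2)%R[); rewrite setTI.
  have mXA j i : measurable (X i @^-1` A j).
    by have := mX i measurableT _ (mA j); rewrite setTI.
  pose E j := \bigcap_i (X i @^-1` A j).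
  have mE j : measurable (E j).
    by apply: fin_bigcap_measurable; [exact: finite_finset | move=> i _].
  set q := (1 - eps / 2) ^+ T0.
  have PE j : j \in Jb -> (P (E j) <= q%:E)%E.
    rewrite inE => hj.
    rewrite /E (indX (fun _ => A j)) //.
    apply: prod_le; first lra.
      by move=> i.
    move=> i; rewrite lawX //; apply: mix_bound => //; lra.
  have bad : [set w | exists j : 'I_s, (eps%:E <= mixture D p j)%E /\
                  j \notin J_large p (fun i => X i w) eps] =
             \big[setU/set0]_(j in Jb) E j.
    rewrite -bigcup_seq_cond; apply/seteqP; split => w /=.
      move=> [k [hj hn]]; exists k; first by rewrite /= mem_index_enum inE.
      move=> i _; rewrite /A /= in_itv /=.
      move: hn; rewrite inE negb_exists => /forallP /(_ i).
      by rewrite -ltNge.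
    move=> [k]; rewrite /= mem_index_enum inE /= => hj hE; exists k; split => //.
    rewrite inE negb_exists; apply/forallP => i; rewrite -ltNge.
    by have := hE i I; rewrite /A /= in_itv.
  rewrite bad; apply: le_trans (@union_bound _ _ _ P _ _ _ _ mE) _.
  apply: (@le_trans _ _ (\sum_(j in Jb) q%:E)%E).
    by apply: lee_sum => j; apply: PE.
  rewrite sumEFin sumr_const -mulr_natl lee_fin.
  have hK := @count_big _ _ _ D _ _ eps mp pd.
  set K := #|_|%:R in hK *.
  have eK : #|in_set Jb|%:R = K.
    by rewrite /K; congr (_%:R); apply: eq_card => x.
  have -> : q *+ #|in_set Jb| = K * q by rewrite -eK mulr_natl.
  rewrite mulr1.
  have K0 : 0 <= K by rewrite /K.
  have e1 : eps * (c0 / eps * L) = c0 * L by field; exact: lt0r_neq0.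
  have q1 : q <= (eps * delta) ^+ 8.
    apply: (@le_trans _ _ (expR (- (eps / 2)) ^+ T0)).
      apply: lerXn2r; rewrite ?nnegrE; first lra.
        exact: ltW (expR_gt0 _).
      by have := expR_ge1Dx (- (eps / 2)); lra.
    rewrite -expRM_natr -hexpL -expRM_natr ler_expR.
    nra.
  have e7 : eps ^+ 7 <= (1 / 2) ^+ 7.
    by apply: lerXn2r; rewrite ?nnegrE; lra.
  have h128 : (1 / 2 : R) ^+ 7 = 1 / 128 by rewrite !exprS expr0; field.
  have d8 : delta ^+ 8 <= delta.
    rewrite exprSr; apply: (@le_trans _ _ (1 * delta)); last by rewrite mul1r.
    apply: ler_wpM2r; first lra.
    by apply: exprn_ile1; lra.
  have a0 : 0 <= eps ^+ 7 by apply: exprn_ge0; lra.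
  have b0 : 0 <= delta ^+ 8 by apply: exprn_ge0; lra.
  have eq8 : (eps * delta) ^+ 8 = eps * (eps ^+ 7 * delta ^+ 8).
    by rewrite exprMn exprS mulrA.
  rewrite eq8 in q1.
  apply: (@le_trans _ _ (K * (eps * (eps ^+ 7 * delta ^+ 8)))).
    exact: ler_wpM2l.
  rewrite mulrA.
  apply: (@le_trans _ _ (1 * (eps ^+ 7 * delta ^+ 8))).
    by apply: ler_wpM2r => //; apply: mulr_ge0.
  rewrite mul1r.
  apply: (@le_trans _ _ (1 / 128 * delta)); last lra.
  apply: ler_pM => //; lra.
Qed.
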